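(* Let $H\subseteq G$ be finite groups such that $H$ contains a Sylow $p$-subgroup of $G$, and let $N=O_p(H)$. Let $M$ be a projective $FG$-module with socle $S$. Let $D=\mathrm{soc}\,\overline{S}_{H/N}$, where $\overline{S}_{H/N}=C_S(N)$ viewed as an $F(H/N)$-module, and let $M'$ be a projective $F(H/N)$-module with socle $D$. Then $\overline{M}_{H/N}=C_M(N)$ (viewed as an $F(H/N)$-module) contains a submodule isomorphic to $M'$. In addition $c_M\ge c_{M'}$, where $c_M=\dim M/|G|_p$ and $c_{M'}=\dim M'/|H/N|_p$.
   Context: $p$ is a prime and $F$ an algebraically closed field of characteristic $p$. For a finite group $X$, $|X|_p$ is the order of a Sylow $p$-subgroup. For an $FX$-module $M$ and a subgroup $K$, $C_M(K)=\{m\in M: km=m\ \forall k\in K\}$; if $K\trianglelefteq H$, then $C_M(K)$ is an $F(H/K)$-module. A projective module is determined up to isomorphism by its socle. *)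

(* Defs.v *)
From HB Require Import structures.
From mathcomp Require Import all_boot all_order all_algebra all_fingroup all_solvable.
From mathcomp Require Import mxrepresentation.
Set Implicit Arguments. Unset Strict Implicit. Unset Printing Implicit Defensive.
Import GRing.Theory.
Local Open Scope ring_scope.

Section ProjSoc.
Variables (F : fieldType) (gT : finGroupType) (G : {group gT}).

(* Homomorphisms act on row
   vectors by right multiplication. *)
Definition mx_projective n (rG : mx_representation F G n) : Prop :=
  forall m1 m2 (rA : mx_representation F G m1) (rB : mx_representation F G m2)
         (f : 'M[F]_(m1, m2)) (g : 'M[F]_(n, m2)),
    (forall x, x \in G -> rA x *m f = f *m rB x) ->
    (forall x, x \in G -> rG x *m g = g *m rB x) ->
    row_full f ->
    exists2 h : 'M[F]_(n, m1),
      (forall x, x \in G -> rG x *m h = h *m rA x) & h *m f = g.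

Definition mxsocle n (rG : mx_representation F G n) (U S : 'M[F]_n) : Prop :=
  [/\ inhabited (mxsemisimple rG S), (S <= U)%MS &
      forall V : 'M[F]_n, mxsimple rG V -> (V <= U)%MS -> (V <= S)%MS].

Lemma mxsocle_module n (rG : mx_representation F G n) (U S : 'M[F]_n) :
  mxsocle rG U S -> mxmodule rG S.
Proof. by case=> [[ssS] _ _]; apply: mxsemisimple_module. Qed.

End ProjSoc.

Section FixQuo.
Variables (F : fieldType) (gT : finGroupType) (G H N : {group gT}) (n : nat).
Variables (rG : mx_representation F G n) (sHG : H \subset G) (nsNH : (N <| H)%g).
Local Notation rH := (subg_repr rG sHG).
Variables (U : 'M[F]_n) (modU : mxmodule rG U).

Definition fixmx := (U :&: rfix_mx rH N)%MS.

Lemma fixmx_module : mxmodule rH fixmx.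
Proof.
apply: capmx_module; last exact: normal_rfix_mx_module.
by rewrite /mxmodule rstabs_subg subsetI subxx (subset_trans sHG modU).
Qed.

Lemma fixmx_ker : N \subset rker (submod_repr fixmx_module).
Proof.
rewrite /rker rstab_submod rfix_mx_rstabC ?normal_sub //.
by rewrite val_submod1 capmxSr.
Qed.

Definition fixquo := quo_repr fixmx_ker (normal_norm nsNH).

End FixQuo.

(* Main.v *)
Require Import Defs.
From HB Require Import structures.
From mathcomp Require Import all_boot all_order all_algebra all_fingroup all_solvable.
From mathcomp Require Import mxrepresentation.
Set Implicit Arguments. Unset Strict Implicit. Unset Printing Implicit Defensive.
Import GRing.Theory.
Local Open Scope ring_scope.

Section Lin1.
Variables (F : fieldType) (m n : nat) (f : 'rV[F]_m -> 'rV[F]_n).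
Hypothesis hf : forall a u v, f (a *: u + v) = a *: f u + f v.
Let hf' : linear f. Proof. by move=> a u v; rewrite hf. Qed.
HB.instance Definition _ := GRing.isLinear.Build F _ _ _ f hf'.
Lemma lin1_mxE u : u *m lin1_mx f = f u.
Proof. exact: mul_rV_lin1. Qed.
End Lin1.

Section Coind.
Variables (F : fieldType) (gT : finGroupType) (G : {group gT}) (n : nat).
Local Notation nG := #|pred_of_set G|.
Local Notation R := (regular_repr F G).

Definition Xmx (x : gT) : 'M[F]_(n * nG) := lin_mx (mulmxr (R x)).

Lemma Xmx_repr : mx_repr G Xmx.
Proof.
split=> [|x y Gx Gy].
  apply/row_matrixP=> i; rewrite !rowE mul_rV_lin /= repr_mx1 mulmx1.
  by rewrite mulmx1 vec_mxK.
apply/row_matrixP=> i; rewrite !rowE mulmxA !mul_rV_lin /= mxvecK.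
by rewrite repr_mxM // mulmxA.
Qed.
Canonical Xrepr := MxRepresentation Xmx_repr.

Lemma eq_gring_index (j : 'I_nG) a : a \in G ->
  (j == gring_index G a) = (enum_val j == a).
Proof.
move=> Ga; apply/eqP/eqP=> [->|<-]; first by rewrite gring_indexK.
by rewrite gring_valK.
Qed.

Lemma colX (A : 'M[F]_(n, nG)) x j : x \in G ->
  col j (A *m R x) = col (gring_index G (enum_val j * x^-1)) A.
Proof.
move=> Gx; rewrite !colE -mulmxA; congr (A *m _).
apply/matrixP=> i k; rewrite ord1 mxE (bigD1 j) //= big1 => [|l nlj]; last first.
  by rewrite !mxE (negbTE nlj) andFb mulr0.
rewrite /regular_mx !mxE !eqxx !andbT mulr1 addr0 /=.
have Gj := enum_valP j; have Gi := enum_valP i.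
rewrite !eq_gring_index ?groupM ?groupV //; congr (_%:R).
by rewrite eq_sym (canF_eq (mulgK x)).
Qed.

Fact evX_key : unit. Proof. by []. Qed.
Definition evX (g : gT) (u : 'rV[F]_(n * nG)) : 'rV[F]_n :=
  locked (col (gring_index G g) (vec_mx u))^T.

Lemma evX_lin g a u v : evX g (a *: u + v) = a *: evX g u + evX g v.
Proof. by rewrite /evX -!lock !linearP. Qed.

Lemma evX_mul u x g : x \in G -> g \in G ->
  evX g (u *m Xmx x) = evX (g * x^-1)%g u.
Proof.
move=> Gx Gg; rewrite /evX -!lock mul_rV_lin /= mxvecK colX //.
by rewrite gring_indexK.
Qed.

Lemma evX_ext u v : (forall g, g \in G -> evX g u = evX g v) -> u = v.
Proof.
move=> euv; apply: (can_inj vec_mxK); apply: trmx_inj.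
apply/row_matrixP=> j; rewrite -!tr_col.
by have := euv _ (enum_valP j); rewrite /evX -!lock gring_valK.
Qed.


Section Ext.
Variables (K : {group gT}) (sKG : K \subset G) (a b : nat).
Variables (rA : gT -> 'M[F]_a) (rB : gT -> 'M[F]_b) (i : 'M[F]_(a, b)).
Variable phi : 'M[F]_(a, n * nG).
Hypotheses (rBM : {in K &, {morph rB : x y / (x * y)%g >-> x *m y}})
  (freei : row_free i) (homi : {in K, forall x, rA x *m i = i *m rB x})
  (homphi : {in K, forall x, rA x *m phi = phi *m Xmx x}).

Let tr (g : gT) := repr (g *: K)%g.
Let kr (g : gT) := ((tr g)^-1 * g)%g.

Let tr_in g : tr g \in (g *: K)%g.
Proof. by apply: mem_repr; apply: lcoset_refl. Qed.

Let kr_in g : kr g \in K.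
Proof.
by rewrite /kr; case/lcosetP: (tr_in g) => y Ky ->; rewrite invMg mulgKV groupV.
Qed.

Let tr_G g : g \in G -> tr g \in G.
Proof.
move=> Gg; case/lcosetP: (tr_in g) => y Ky ->.
by rewrite groupM // (subsetP sKG).
Qed.

Let tr_shift g h : h \in K -> tr (g * h^-1)%g = tr g.
Proof. by move=> Kh; rewrite /tr lcosetM lcoset_id ?groupV. Qed.

Let kr_shift g h : h \in K -> kr (g * h^-1)%g = (kr g * h^-1)%g.
Proof. by move=> Kh; rewrite /kr tr_shift // mulgA. Qed.

Let tr_kr g : (tr g * kr g)%g = g.
Proof. by rewrite /kr mulKVg. Qed.

Let J := sval (sig_eqW (row_freeP freei)).
Let iJ : i *m J = 1%:M.
Proof. by rewrite /J; case: (sig_eqW _). Qed.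

Definition psifun (v : 'rV[F]_b) : 'rV[F]_(n * nG) :=
  mxvec (\matrix_(r, j) evX (tr (enum_val j))
                   (v *m rB (kr (enum_val j))^-1 *m J *m phi) 0 r).

Let evX_psi v g : g \in G -> evX g (psifun v) = evX (tr g) (v *m rB (kr g)^-1 *m J *m phi).
Proof.
move=> Gg; rewrite /psifun {1}/evX -lock mxvecK; apply/rowP=> r.
by rewrite !mxE gring_indexK.
Qed.

Let psifun_lin c u v : psifun (c *: u + v) = c *: psifun u + psifun v.
Proof.
rewrite /psifun -linearP /=; congr mxvec; apply/matrixP=> r j.
by rewrite mxE !mulmxDl -!scalemxAl evX_lin !mxE.
Qed.

Lemma X_ext : exists2 psi : 'M[F]_(b, n * nG),
  {in K, forall x, rB x *m psi = psi *m Xmx x} & i *m psi = phi.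
Proof.
exists (lin1_mx psifun) => [x Kx|].
  have Gx := subsetP sKG x Kx.
  apply/row_matrixP=> r; rewrite !rowE !mulmxA !(lin1_mxE psifun_lin).
  apply: evX_ext => g Gg; rewrite evX_mul // !evX_psi ?groupM ?groupV //.
  by rewrite tr_shift // kr_shift // (invMg (kr g)) (invgK x) (rBM Kx) ?groupV ?kr_in // !mulmxA.
apply/row_matrixP=> r; rewrite !rowE mulmxA (lin1_mxE psifun_lin).
apply: evX_ext => g Gg; rewrite evX_psi //.
rewrite -[_ *m i *m _]mulmxA -homi ?groupV ?kr_in // mulmxA.
rewrite -[_ *m i *m J]mulmxA iJ mulmx1 -mulmxA homphi ?groupV ?kr_in //.
rewrite mulmxA evX_mul ?tr_G ?groupV //.
  by rewrite invgK tr_kr.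
by rewrite (subsetP sKG) ?kr_in.
Qed.
End Ext.


Section Surj.
Variable rG : mx_representation F G n.

Definition fXfun (u : 'rV[F]_(n * nG)) : 'rV[F]_n :=
  \sum_(j < nG) evX (enum_val j) u *m rG (enum_val j).

Lemma fXfun_lin c u v : fXfun (c *: u + v) = c *: fXfun u + fXfun v.
Proof.
rewrite /fXfun scaler_sumr -big_split; apply: eq_bigr => j _.
by rewrite evX_lin mulmxDl scalemxAl.
Qed.

Definition fX := lin1_mx fXfun.

Lemma fXE u : u *m fX = fXfun u.
Proof. exact: lin1_mxE fXfun_lin u. Qed.

Lemma fX_hom x : x \in G -> Xmx x *m fX = fX *m rG x.
Proof.
move=> Gx; apply/row_matrixP=> r; rewrite !rowE !mulmxA !fXE.
pose s (j : 'I_nG) := gring_index G (enum_val j * x^-1)%g.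
have sinj : injective s.
  move=> j1 j2 /(congr1 (@enum_val _ (pred_of_set G))).
  rewrite !gring_indexK ?groupM ?groupV ?enum_valP //.
  by move/mulIg/enum_val_inj.
rewrite /fXfun mulmx_suml [RHS](reindex_inj sinj); apply: eq_bigr => j _.
have Gj := enum_valP j.
rewrite evX_mul // /s gring_indexK ?groupM ?groupV // -mulmxA -repr_mxM ?groupM ?groupV //.
by rewrite mulgKV.
Qed.

Lemma fX_full : row_full fX.
Proof.
apply/row_fullP.
exists (\matrix_(i < n) mxvec (delta_mx i (gring_index G 1%g) : 'M[F]_(n, nG))).
apply/row_matrixP=> i; rewrite row_mul rowK fXE /fXfun.
rewrite (bigD1 (gring_index G 1%g)) //= big1 => [|j nj]; last first.
  rewrite /evX -lock mxvecK colE gring_valK mul_delta_mx_cond.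
  by rewrite eq_sym (negbTE nj) mulr0n trmx0 mul0mx.
rewrite addr0 !(@gring_indexK _ G 1%g) // repr_mx1 mulmx1 /evX -lock mxvecK colE mul_delta_mx trmx_delta.
by rewrite rowE mulmx1.
Qed.

Lemma proj_emb : mx_projective rG ->
  exists2 h : 'M[F]_(n, n * nG),
    {in G, forall x, rG x *m h = h *m Xmx x} & h *m fX = 1%:M.
Proof.
move=> projM; have hom1 : forall x, x \in G -> rG x *m 1%:M = 1%:M *m rG x.
  by move=> x _; rewrite mulmx1 mul1mx.
have [h hh h1] := projM _ _ Xrepr rG fX 1%:M fX_hom hom1 fX_full.
by exists h.
Qed.
End Surj.


Section FixCount.
Variable N : {group gT}.
Hypothesis sNG : N \subset G.

Let T := [set repr (g *: N)%g | g in G].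

Let cardT : (#|T| <= #|G : N|%g)%N.
Proof.
rewrite -card_lcosets /T /lcosets.
have -> : [set repr (g *: N)%g | g in G] = [set repr x | x in [set lcoset N x | x in G]].
  by rewrite -imset_comp; apply: eq_imset => g; rewrite /= lcosetE.
exact: leq_imset_card.
Qed.

Definition Pfun (u : 'rV[F]_(n * nG)) : 'rV[F]_(n * #|T|) :=
  mxvec (\matrix_(r, j) evX (enum_val j) u 0 r).

Let Pfun_lin c u v : Pfun (c *: u + v) = c *: Pfun u + Pfun v.
Proof.
rewrite /Pfun -linearP /=; congr mxvec; apply/matrixP=> r j.
by rewrite mxE evX_lin !mxE.
Qed.

Lemma X_fix_rank : (\rank (rfix_mx Xrepr N) <= n * #|G : N|%g)%N.
Proof.
set A := rfix_mx Xrepr N.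
have PE := lin1_mxE Pfun_lin.
rewrite -(mxrank_mul_ker A (lin1_mx Pfun)).
have -> : (A :&: kermx (lin1_mx Pfun))%MS = 0.
  apply/row_matrixP=> i; rewrite row0; set v := row i _.
  have vA : (v <= A)%MS by apply: submx_trans (row_sub _ _) (capmxSl _ _).
  have vP : v *m lin1_mx Pfun = 0.
    by apply/sub_kermxP; apply: submx_trans (row_sub _ _) (capmxSr _ _).
  rewrite PE in vP.
  have vT t (Tt : t \in T) : evX t v = 0.
    have M0 : (\matrix_(r < n, j < #|T|) evX (enum_val j) v 0 r : 'M[F]_(n, #|T|)) = 0.
      by apply/eqP; rewrite -mxvec_eq0 -/(Pfun v) vP.
    apply/rowP=> r; move/matrixP: M0 => /(_ r (enum_rank_in Tt t)).
    by rewrite !mxE enum_rankK_in.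
  apply: evX_ext => g Gg.
  have Tt : repr (g *: N)%g \in T by apply: imset_f.
  have := vT _ Tt.
  case/lcosetP: (mem_repr _ (lcoset_refl N g)) => y Ny ->.
  have Ny' : y^-1%g \in G by rewrite groupV (subsetP sNG).
  have /rfix_mxP fixv := vA.
  move=> H; rewrite -(fixv y^-1%g) ?groupV // evX_mul // invgK H.
  by rewrite /evX -lock; apply/rowP=> r; rewrite !mxE.
by rewrite mxrank0 addn0 (leq_trans (rank_leq_col _)) // leq_mul2l cardT orbT.
Qed.
End FixCount.

End Coind.

Section Nil.
Variables (F : fieldType) (d : nat) (T : 'M[F]_d).

Lemma nil_rank k : forall m (U : 'M[F]_(m, d)), (U *m T <= U)%MS ->
  U *m T ^+ k = 0 -> (\rank U <= k * \rank (U :&: kermx T))%N.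
Proof.
elim: k => [|k IH] m U sUT.
  by rewrite expr0 mulmx1 => ->; rewrite mxrank0.
rewrite exprS mulmxA => UT0.
have := IH _ (U *m T) (submxMr T sUT) UT0.
have le1 : (\rank (U *m T :&: kermx T) <= \rank (U :&: kermx T))%N.
  by apply: mxrankS; apply: capmxS.
rewrite -(mxrank_mul_ker U T) mulSn => le2.
by rewrite addnC leq_add2l; apply: leq_trans le2 (leq_mul (leqnn _) le1).
Qed.
End Nil.

Lemma pchar_mx (F : fieldType) d p : p \in [pchar F] -> p \in [pchar 'M[F]_d.+1].
Proof.
case/andP=> pr /eqP p0; apply/andP; split=> //.
by apply/eqP/matrixP=> i j; rewrite mulmxnE !mxE -mulr_natr p0 mulr0.
Qed.

Section PFix.
Variables (F : fieldType) (p : nat) (charFp : p \in [pchar F]) (gT : finGroupType).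

Lemma pgroup_fix_rank d (K : {group gT}) (rK : mx_representation F K d)
  (U : 'M[F]_d) :
  (p.-group K)%g -> mxmodule rK U -> (\rank U <= #|K| * \rank (U :&: rfix_mx rK K))%N.
Proof.
move: {2}_.+1 (ltnSn #|K|) => m; elim: m => // m IH in K rK U *.
move=> ltKm pK modU.
case: d rK U modU IH => [|d] rK U modU IH.
  by rewrite (leq_trans (rank_leq_col U)).
have [K1|[L maxL _]] := maximal_exists (sub1G K).
  rewrite -K1 cards1 mul1n; apply: mxrankS; rewrite sub_capmx submx_refl /=.
  apply/rfix_mxP=> x; rewrite inE => /eqP->.
  by rewrite repr_mx1 mulmx1.
have [prLK maxLK] := maxgroupP maxL.
have sLK := proper_sub prLK.
have nLK := p_maximal_normal pK maxL.
have iLK := p_maximal_index pK maxL.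
have [_ [x Kx nLx]] := properP prLK.
pose rL := subg_repr rK sLK.
have modUL : mxmodule rL U.
  by apply/mxmoduleP=> y Ly; apply: (mxmoduleP modU y (subsetP sLK y Ly)).
have pL : (p.-group L)%g := pgroupS sLK pK.
have ltL : (#|L| < m)%N := leq_trans (proper_card prLK) ltKm.
have IH1 := IH L rL U ltL pL modUL.
set U' := (U :&: rfix_mx rK L)%MS.
have {}IH1 : (\rank U <= #|L| * \rank U')%N := IH1.
have modU' : mxmodule rK U' := capmx_module modU (normal_rfix_mx_module rK nLK).
pose T := rK x - 1%:M.
have sUT : (U' *m T <= U')%MS.
  rewrite mulmxBr mulmx1 addmx_sub ?(mxmoduleP modU' x Kx) //.
  by rewrite eqmx_opp.
have chM := pchar_mx d charFp.
have xpL : (x ^+ p)%g \in L.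
  have nLx' : x \in 'N(L)%g := subsetP (normal_norm nLK) x Kx.
  apply: coset_idr; first by rewrite groupX.
  rewrite morphX //.
  have <- : #|K / L|%g = p by rewrite card_quotient ?normal_norm.
  by rewrite expg_cardG // mem_quotient.
have UTp : U' *m T ^+ p = 0.
  have := pFrobenius_autB_comm chM (commr1 (rK x)).
  rewrite /GRing.Frobenius_aut expr1n /T => ->.
  rewrite -repr_mxX // mulmxBr mulmx1.
  have /rfix_mxP fixU : (U' <= rfix_mx rK L)%MS by apply: capmxSr.
  by rewrite fixU ?subrr.
have := nil_rank sUT UTp.
set V := (U' :&: kermx T)%MS => le1.
have sV : (V <= U :&: rfix_mx rK K)%MS.
  rewrite sub_capmx (submx_trans (capmxSl _ _) (capmxSl _ _)) /=.
  have VT : V *m T = 0 by apply/sub_kermxP; apply: capmxSr.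
  have Vx : V *m rK x = V.
    by move: VT; rewrite mulmxBr mulmx1 => /eqP; rewrite subr_eq0 => /eqP.
  have /rfix_mxP VL : (V <= rfix_mx rK L)%MS.
    exact: submx_trans (capmxSl _ _) (capmxSr _ _).
  have sSK : rstab rK V \subset K by apply/subsetP=> y; rewrite inE => /andP[].
  have KS : K \subset rstab rK V.
    case/eqVproper: sSK => [-> // | prS].
    have sLS : L \subset rstab rK V.
      by apply/subsetP=> y Ly; rewrite inE (subsetP sLK) //= VL.
    have eqS := maxLK _ prS sLS.
    by case/negP: nLx; rewrite -eqS inE Kx Vx /=.
  apply/rfix_mxP=> y Ky.
  by have := subsetP KS y Ky; rewrite inE Ky => /eqP.
have le2 := mxrankS sV.
rewrite -(Lagrange sLK) iLK -mulnA (leq_trans IH1) // leq_mul2l.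
apply/orP; right; apply: (leq_trans le1); rewrite leq_mul2l.
by rewrite le2 orbT.
Qed.
End PFix.

From mathcomp Require Import zify.

Lemma bound_arith k j n rq q a : rq = (n * (k * j) - n)%N ->
  (rq <= k * q)%N -> (a + q <= n * j)%N -> (0 < k * j)%N -> (k * a <= n)%N.
Proof.
move=> -> h1 h2 h3.
have h4 : (k * a + k * q <= n * (k * j))%N.
  by rewrite -mulnDr mulnCA leq_mul2l h2 orbT.
have h5 : (n <= n * (k * j))%N by rewrite leq_pmulr.
move: h1 h4 h5; move: (k * a)%N (k * q)%N (n * (k * j))%N => x y z.
lia.
Qed.

Section ProjBounds.
Variables (F : fieldType) (gT : finGroupType) (G : {group gT}) (n : nat).
Variables (rG : mx_representation F G n) (projM : mx_projective rG).

Lemma proj_inj (K : {group gT}) (sKG : K \subset G) a b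
  (rA : gT -> 'M[F]_a) (rB : gT -> 'M[F]_b) (i : 'M[F]_(a, b)) (phi : 'M[F]_(a, n)) :
  {in K &, {morph rB : x y / (x * y)%g >-> x *m y}} -> row_free i ->
  {in K, forall x, rA x *m i = i *m rB x} ->
  {in K, forall x, rA x *m phi = phi *m rG x} ->
  exists2 psi : 'M[F]_(b, n),
    {in K, forall x, rB x *m psi = psi *m rG x} & i *m psi = phi.
Proof.
move=> rBM freei homi homphi.
have [h hh h1] := proj_emb projM.
have homphi' : {in K, forall x, rA x *m (phi *m h) = (phi *m h) *m Xmx F G n x}.
  move=> x Kx; have Gx := subsetP sKG x Kx.
  by rewrite mulmxA homphi // -mulmxA hh // mulmxA.
have [psi0 hpsi0 ipsi0] := X_ext sKG rBM freei homi homphi'.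
exists (psi0 *m fX rG) => [x Kx|].
  have Gx := subsetP sKG x Kx.
  by rewrite mulmxA hpsi0 // -mulmxA fX_hom // mulmxA.
by rewrite mulmxA ipsi0 -mulmxA h1 mulmx1.
Qed.


Lemma proj_fix_bound p (charFp : p \in [pchar F]) (N : {group gT})
  (sNG : N \subset G) (pN : (p.-group N)%g) :
  (#|N| * \rank (rfix_mx rG N) <= n)%N.
Proof.
have [h hh h1] := proj_emb projM.
set f := fX rG.
have rf : \rank f = n by apply/eqP; apply: fX_full.
have freeh : row_free h by apply/row_freeP; exists f.
pose rN := subg_repr (Xrepr F G n) sNG.
set Q := kermx f.
have modQ : mxmodule rN Q.
  apply/mxmoduleP=> x Nx; have Gx := subsetP sNG x Nx.
  apply/sub_kermxP; rewrite -mulmxA [_ *m f]fX_hom // mulmxA.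
  by move/sub_kermxP: (submx_refl Q) => ->; rewrite mul0mx.
have le1 := pgroup_fix_rank charFp pN modQ.
set A := rfix_mx (Xrepr F G n) N.
have {le1}le1 : (\rank Q <= #|N| * \rank (Q :&: A))%N := le1.
have rQ : \rank Q = (n * #|G| - n)%N by rewrite mxrank_ker rf.
set W0 := rfix_mx rG N.
set E := W0 *m h.
have rE : \rank E = \rank W0 by rewrite mxrankMfree.
have sEA : (E <= A)%MS.
  apply/rfix_mxP=> x Nx; have Gx := subsetP sNG x Nx.
  rewrite -mulmxA -hh // mulmxA.
  by have /rfix_mxP -> := submx_refl W0.
have EQ0 : (E :&: (Q :&: A))%MS = 0.
  apply/row_matrixP=> i; rewrite row0; set c := row i _.
  have cE : (c <= E)%MS by apply: submx_trans (row_sub _ _) (capmxSl _ _).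
  have cQ : (c <= Q)%MS.
    by apply: submx_trans (row_sub _ _) (submx_trans (capmxSr _ _) (capmxSl _ _)).
  have := mulmxKpV cE; rewrite /E mulmxA => def_c.
  move/sub_kermxP: cQ; rewrite -def_c -mulmxA h1 mulmx1 => w0.
  by rewrite w0 mul0mx.
have le2 : (\rank W0 + \rank (Q :&: A) <= n * #|G : N|%g)%N.
  rewrite -rE -(mxrank_disjoint_sum EQ0).
  apply: (leq_trans _ (X_fix_rank F n sNG)); apply: mxrankS.
  by rewrite addsmx_sub sEA capmxSr.
have cG : #|G| = (#|N| * #|G : N|%g)%N by rewrite Lagrange.
have kj0 : (0 < #|N| * #|G : N|%g)%N by rewrite -cG cardG_gt0.
move: rQ le1 le2 kj0.
move: (\rank Q) (\rank (Q :&: A)) (\rank W0) => rq q a; rewrite cG.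
exact: bound_arith.
Qed.

End ProjBounds.

Lemma submod1J (F : fieldType) (gT : finGroupType) (G : {group gT}) n
  (rG : mx_representation F G n) (U : 'M[F]_n) (modU : mxmodule rG U) x :
  x \in G -> submod_repr modU x *m val_submod 1%:M = val_submod 1%:M *m rG x.
Proof.
move=> Gx; rewrite -(val_submodJ modU 1%:M Gx) mul1mx.
by rewrite [RHS]val_submodE.
Qed.

Lemma val_submod1_free (F : fieldType) n (U : 'M[F]_n) :
  row_free (val_submod 1%:M : 'M_(\rank U, n)).
Proof. by rewrite /row_free val_submod1. Qed.

Theorem lemma3p9 (p : nat) (F : closedFieldType) (charF : p \in [pchar F])
  (gT : finGroupType) (G H : {group gT}) (sHG : H \subset G)
  (P : {group gT}) (sylP : (p.-Sylow(G) P)%g) (sPH : P \subset H)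
  (n : nat) (rG : mx_representation F G n) (projM : mx_projective rG)
  (S : 'M[F]_n) (socS : mxsocle rG 1%:M S)
  (D : 'M[F]_(\rank (fixmx ('O_p(H))%G rG sHG S)))
  (socD : mxsocle (fixquo sHG (pcore_normal p H) (mxsocle_module socS)) 1%:M D)
  (m' : nat) (rM' : mx_representation F (H / ('O_p(H))%g)%g m')
  (projM' : mx_projective rM')
  (S' : 'M[F]_m') (socS' : mxsocle rM' 1%:M S')
  (isoS' : mx_rsim (submod_repr (mxsocle_module socS'))
                   (submod_repr (mxsocle_module socD))) :
  (exists U : 'M[F]_(\rank (fixmx ('O_p(H))%G rG sHG 1%:M)),
     exists modU : mxmodule (fixquo sHG (pcore_normal p H) (mxmodule1 rG)) U,
       mx_rsim (submod_repr modU) rM')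
  /\ (m' * #|G|`_p <= n * #|(H / ('O_p(H))%g)%g|`_p)%N.
Proof.
set N := ('O_p(H))%G.
have nsNH : (N <| H)%g := pcore_normal p H.
have sNH := normal_sub nsNH; have nNH := normal_norm nsNH.
have pN : (p.-group N)%g := pcore_pgroup p H.
have sNG := subset_trans sNH sHG.
have cosetH x : x \in H -> coset N x \in (H / N)%g by move=> Hx; apply: mem_quotient.
have cosetM x y : x \in H -> y \in H -> coset N (x * y)%g = (coset N x * coset N y)%g.
  by move=> Hx Hy; rewrite morphM // (subsetP nNH).
set modS := mxsocle_module socS.
set modD := mxsocle_module socD.
set modS' := mxsocle_module socS'.
set fS := fixmx_module sHG (pcore_normal p H) modS.
set W := fixmx N rG sHG 1%:M.
set fW := fixmx_module sHG (pcore_normal p H) (mxmodule1 rG).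
case: isoS' => B eqd freeB homB.
set R1 := fixquo sHG (pcore_normal p H) modS.
have R1E x : x \in H -> R1 (coset N x) = submod_repr fS x.
  by move=> Hx; rewrite /R1 /fixquo quo_repr_coset.
set V1 := (val_submod (1%:M : 'M_(\rank D)) : 'M_(\rank D, _)).
have hV1 y : y \in (H / N)%g -> submod_repr modD y *m V1 = V1 *m R1 y.
  by move=> Hy; apply: submod1J.
set V2 := (val_submod (1%:M : 'M_(\rank (fixmx N rG sHG S))) : 'M_(_, n)).
have hV2 x : x \in H -> submod_repr fS x *m V2 = V2 *m rG x.
  by move=> Hx; apply: (submod1J fS Hx).
set i := (val_submod (1%:M : 'M_(\rank S')) : 'M_(_, m')).
have hi y : y \in (H / N)%g -> submod_repr modS' y *m i = i *m rM' y.
  by move=> Hy; apply: submod1J.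
have freeV1 : row_free V1 by apply: val_submod1_free.
have freeV2 : row_free V2 by apply: val_submod1_free.
have freei : row_free i by apply: val_submod1_free.
have iS' : (i :=: S')%MS by apply: val_submod1.
clearbody V1 V2 i.
pose phi := B *m V1 *m V2.
pose rA x := submod_repr modS' (coset N x).
pose rB x := rM' (coset N x).
have rBM : {in H &, {morph rB : x y / (x * y)%g >-> x *m y}}.
  by move=> x y Hx Hy; rewrite /rB cosetM // repr_mxM ?cosetH.
have homi : {in H, forall x, rA x *m i = i *m rB x}.
  by move=> x Hx; rewrite /rA /rB hi ?cosetH.
have homphi : {in H, forall x, rA x *m phi = phi *m rG x}.
  move=> x Hx; rewrite /phi /rA !mulmxA homB ?cosetH //.
  rewrite -[B *m _ *m V1]mulmxA hV1 ?cosetH // R1E // mulmxA.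
  by rewrite -[_ *m submod_repr fS x *m V2]mulmxA hV2 // mulmxA.
have freephi : row_free phi.
  by rewrite /row_free /phi !mxrankMfree.
have [psi hpsi ipsi] := proj_inj projM sHG rBM freei homi homphi.
have psiW : (psi <= W)%MS.
  rewrite /W /fixmx sub_capmx submx1 /=; apply/rfix_mxP=> x Nx.
  have Hx := subsetP sNH x Nx.
  by rewrite /= -hpsi // /rB coset_id // repr_mx1 mul1mx.
have freepsi : row_free psi.
  case freepsi: (row_free psi) => //.
  have nzK : kermx psi != 0.
    rewrite -mxrank_eq0 mxrank_ker subn_eq0 -ltnNge.
    by rewrite ltn_neqAle rank_leq_row andbT; move: freepsi; rewrite /row_free => ->.
  have modK : mxmodule rM' (kermx psi).
    apply/mxmoduleP=> y Hy; case/morphimP: Hy => x _ Hx ->.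
    apply/sub_kermxP; rewrite -mulmxA.
    have -> : rM' (coset N x) *m psi = psi *m rG x by apply: hpsi.
    by rewrite mulmxA; move/sub_kermxP: (submx_refl (kermx psi)) => ->; rewrite mul0mx.
  apply: (mxsimple_exists modK nzK) => -[V simV sVK].
  have [_ _ socP] := socS'.
  have sVS' : (V <= S')%MS by apply: socP => //; apply: submx1.
  have Vpsi : V *m psi = 0 by apply/sub_kermxP.
  rewrite -iS' in sVS'.
  have defV := mulmxKpV sVS'.
  move: Vpsi; rewrite -defV -mulmxA ipsi => /eqP.
  rewrite mulmx_free_eq0 // => /eqP Y0.
  by case: simV => _ nzV _; case/eqP: nzV; rewrite -defV Y0 !mul0mx.
split.
  set Rw := fixquo sHG (pcore_normal p H) (mxmodule1 rG).
  have RwE x : x \in H -> Rw (coset N x) = submod_repr fW x.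
    by move=> Hx; rewrite /Rw /fixquo quo_repr_coset.
  set Psi := in_submod W psi.
  have hPsi y : y \in (H / N)%g -> rM' y *m Psi = Psi *m Rw y.
    case/morphimP=> x _ Hx ->; rewrite RwE // /Psi -(in_submodJ fW x psiW).
    have e : psi *m subg_repr rG sHG x = rM' (coset N x) *m psi.
      exact: esym (hpsi x Hx).
    by rewrite e [RHS]in_submodE [in_submod W psi]in_submodE mulmxA.
  have freePsi : row_free Psi by rewrite /row_free mxrank_in_submod.
  have modPsi : mxmodule Rw Psi.
    by apply/mxmoduleP=> y Hy; rewrite -hPsi // submxMl.
  set U := <<Psi>>%MS.
  have modU : mxmodule Rw U by rewrite (eqmx_module _ (genmxE Psi)).
  have sPsiU : (Psi <= U)%MS by rewrite genmxE.
  exists U, modU; apply: mx_rsim_sym; exists (in_submod U Psi).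
  - by rewrite genmxE; move/eqP: freePsi.
  - by rewrite /row_free mxrank_in_submod.
  move=> y Hy; rewrite -(in_submodJ modU y sPsiU) -hPsi //.
  by rewrite [RHS]in_submodE [in_submod U Psi]in_submodE mulmxA.
have rW : \rank W = \rank (rfix_mx rG N) by rewrite /W /fixmx cap1mx.
have m'W : (m' <= \rank W)%N.
  by move/eqP: freepsi => {1}<-; apply: mxrankS.
have bnd := proj_fix_bound projM charF sNG pN.
have sylH : (p.-Sylow(H) P)%g := pHall_subl sPH sHG sylP.
have eGp : (#|G|`_p)%N = (#|H|`_p)%N by rewrite -(card_Hall sylP) (card_Hall sylH).
have eH : #|H| = (#|N| * #|(H / N)%g|)%N by rewrite card_quotient // Lagrange.
rewrite eGp eH partnM ?cardG_gt0 // part_pnat_id // mulnA leq_mul2r.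
by apply/orP; right; rewrite mulnC (leq_trans _ bnd) // leq_mul2l -rW m'W orbT.
Qed.
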